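(* Let $k$ be a positive integer. For every integer $n\ge1$, $$D_k^e(n)-D_k^o(n)=\begin{cases}(-1)^m, & \text{if } 1\le n=\tfrac12 m(3m\pm1)\le k-1 \text{ for some integer } m,\\ P_e^{(k)}(d,n)-P_o^{(k)}(d,n), & \text{if } k-1<n\le \tfrac12 k(k-1),\\ 0,&\text{otherwise.}\end{cases}$$
   Context: $D_k(n)$ is the number of partitions of $n$ into non-negative parts (the part $0$ is allowed) in which the smallest part appears exactly $k$ times and no other part is repeated. $D_k^e(n)$ (resp. $D_k^o(n)$) is the number of such partitions in which the number of parts greater than the smallest part is even (resp. odd). $P_e^{(k)}(d,n)$ (resp. $P_o^{(k)}(d,n)$) is the number of partitions of $n$ into an even (resp. odd) number of distinct positive parts, none exceeding $k-1$. *)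

(* Defs.v *)
From mathcomp Require Import all_boot all_algebra.
Set Implicit Arguments. Unset Strict Implicit. Unset Printing Implicit Defensive.

(* A partition of n into non-negative parts is encoded by its multiplicity
   function: m i = number of times the part i occurs (i = 0..n; no part of a
   partition of n exceeds n).  Multiplicities are taken in 'I_(n+k).+1; under
   the defining constraints of D_k every multiplicity is <= k, so this bound
   excludes no relevant partition. *)
Definition mult_fun (n k : nat) := {ffun 'I_n.+1 -> 'I_(n + k).+1}.

Definition is_Dk (k n : nat) (m : mult_fun n k) (s : 'I_n.+1) : bool :=
  [&& \sum_(i < n.+1) i * m i == n,
      m s == k :> nat,
      [forall i : 'I_n.+1, (i < s) ==> (m i == 0 :> nat)] &
      [forall i : 'I_n.+1, (s < i) ==> (m i <= 1)]].

Definition parts_above (n k : nat) (m : mult_fun n k) (s : 'I_n.+1) : nat :=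
  \sum_(i < n.+1 | s < i) m i.

Definition Dk_par (k n : nat) (b : bool) : nat :=
  #|[set m : mult_fun n k |
      [exists s : 'I_n.+1, is_Dk m s && (odd (parts_above m s) == b)]]|.

Definition Dk_e k n := Dk_par k n false.
Definition Dk_o k n := Dk_par k n true.

(* P_e^{(k)}(d,n) (b = false) and P_o^{(k)}(d,n) (b = true): partitions of n
   into distinct positive parts none exceeding k-1, i.e. subsets of {1..k-1}
   with sum n, with an even / odd number of parts. *)
Definition Pk_par (k n : nat) (b : bool) : nat :=
  #|[set S : {set 'I_k} |
      [&& [forall i in S, 0 < (i : nat)],
          \sum_(i in S) (i : nat) == n &
          odd #|S| == b]]|.

Definition Pk_e k n := Pk_par k n false.
Definition Pk_o k n := Pk_par k n true.

Import GRing.Theory.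
Local Open Scope ring_scope.
Definition pentagonal_index (n : nat) (m : int) : Prop :=
  ((2 * n)%N)%:Z = m * (3 * m + 1) \/ ((2 * n)%N)%:Z = m * (3 * m - 1).

(* Main.v *)
Require Import Defs.
From mathcomp Require Import all_boot all_algebra.
From mathcomp Require Import zify ring.
Import GRing.Theory Num.Theory.
Local Open Scope ring_scope.

Lemma coef_sign (n : nat) (p : {poly int}) i :
  ((-1) ^+ n * p)`_i = (-1) ^+ n * p`_i.
Proof.
by rewrite -signr_odd -[in RHS]signr_odd; case: (odd n);
  rewrite ?expr0 ?expr1 ?mul1r ?mulN1r ?coefN.
Qed.

Lemma prod_expand (I : finType) (P : pred I) (w : I -> nat) i0 :
  (\prod_(j | P j) (1 - 'X^(w j)) : {poly int})`_i0 =
  \sum_(A : {set I} | A \subset P)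
     (-1) ^+ #|A| * ((\sum_(j in A) w j)%N == i0)%:R.
Proof.
rewrite big_mkcond /=.
rewrite (eq_bigr (fun j => (if P j then - 'X^(w j) else 0) + 1)); last first.
  by move=> j _; case: (P j); rewrite ?add0r // addrC.
rewrite bigA_distr coef_sum [RHS]big_mkcond /=.
apply: eq_bigr => A _.
case: ifP => sAP.
  rewrite -big_mkcond /=.
  rewrite (eq_bigr (fun j => - 'X^(w j))); last first.
    by move=> j jA; have := subsetP sAP j jA; rewrite unfold_in => ->.
  rewrite prodrN coef_sign; congr (_ * _).
  rewrite -(big_morph (fun m => 'X^m) (@exprD _ 'X) (expr0 'X)).
  by rewrite coefXn eq_sym.
have [j jA njP] : exists2 j, j \in A & ~~ P j.
  by move/negbT/subsetPn: sAP => [j h1 h2]; exists j; rewrite // -topredE.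
rewrite (bigD1 j) //= jA (negbTE njP) mul0r coef0 //.
Qed.
Lemma isDk_uniq {k n} {m : mult_fun n k} {s s'} : (0 < k)%N ->
  is_Dk m s -> is_Dk m s' -> s = s'.
Proof.
move=> k0 /and4P [_ /eqP ms /forallP h1 _] /and4P [_ /eqP ms' /forallP h1' _].
apply: val_inj => /=; case: (ltngtP s s') => // lt.
  by have := h1' s; rewrite lt /= ms => /eqP k00; rewrite k00 in k0.
by have := h1 s'; rewrite lt /= ms' => /eqP k00; rewrite k00 in k0.
Qed.

Lemma card_int (T : finType) (P : pred T) :
  (#|[set x | P x]|)%:Z = \sum_(x : T) (P x : nat)%:R.
Proof.
rewrite -sum1_card -natz natr_sum big_mkcond /=; apply: eq_bigr => x _.
by rewrite inE; case: (P x).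
Qed.

Lemma D_split k n : (0 < k)%N ->
  (Dk_e k n)%:Z - (Dk_o k n)%:Z =
  \sum_(s : 'I_n.+1) \sum_(m : mult_fun n k)
     (if is_Dk m s then (-1) ^+ (parts_above m s) else 0).
Proof.
move=> k0; rewrite /Dk_e /Dk_o /Dk_par !card_int -sumrB exchange_big /=.
apply: eq_bigr => m _.
case: (boolP [exists s, is_Dk m s]) => [/existsP [s0 h0] | /existsPn hn].
  rewrite (bigD1 s0) //= h0 big1 ?addr0; last first.
    move=> s /negbTE ns; case: ifP => // hs.
    by rewrite (isDk_uniq k0 hs h0) eqxx in ns.
  have E : forall b, [exists s, is_Dk m s && (odd (parts_above m s) == b)] =
                     (odd (parts_above m s0) == b).
    move=> b; apply/existsP/idP => [[s /andP [hs hb]]|hb]; last by exists s0; rewrite h0.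
    by rewrite -(isDk_uniq k0 hs h0).
  rewrite !E -signr_odd; case: (odd _) => /=; rewrite ?expr0 ?expr1 //.
have E : forall b, [exists s, is_Dk m s && (odd (parts_above m s) == b)] = false.
  by move=> b; apply/existsP => [[s /andP [hs _]]]; have := hn s; rewrite hs.
rewrite !E subrr big1 // => s _; by rewrite (negbTE (hn s)).
Qed.

Definition RR (j N : nat) : {poly int} := \prod_(i < N.+1 | (j < i)%N) (1 - 'X^i).

Section Fix.
Variables (k n : nat) (k0 : (0 < k)%N) (s : 'I_n.+1).

Definition phi (A : {set 'I_n.+1}) : mult_fun n k :=
  [ffun i : 'I_n.+1 => inord (if i == s then k else nat_of_bool (i \in A))].
Definition psi (m : mult_fun n k) : {set 'I_n.+1} :=
  [set i : 'I_n.+1 | (s < i)%N && (m i == 1 :> nat)].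

Lemma phiE (A : {set 'I_n.+1}) i : (phi A i : nat) = if i == s then k else nat_of_bool (i \in A).
Proof.
rewrite ffunE inordK //; case: ifP => _; first by rewrite ltnS leq_addl.
by case: (i \in A) => //=; rewrite ltnS; lia.
Qed.

Lemma phi_psi m : is_Dk m s -> phi (psi m) = m.
Proof.
move=> /and4P [_ /eqP ms /forallP h1 /forallP h2].
apply/ffunP => i; apply: val_inj => /=; rewrite phiE /psi inE.
case: eqP => [->|ne]; first by rewrite ms.
case: (ltngtP s i) => lt /=.
- by have := h2 i; rewrite lt /=; case: (nat_of_ord (m i)) => [|[|]].
- by have := h1 i; rewrite lt /= => /eqP ->.
- by case: ne; apply: val_inj.
Qed.

Lemma sum_phi (A : {set 'I_n.+1}) : A \subset (fun i : 'I_n.+1 => (s < i)%N) ->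
  (\sum_(i < n.+1) i * phi A i = k * s + \sum_(i in A) i)%N.
Proof.
move=> sA.
rewrite (bigD1 s) //= phiE eqxx [(s * k)%N]mulnC; congr (_ + _)%N.
rewrite [RHS]big_mkcond [RHS](bigD1 s) //=.
have -> : (s \in A) = false.
  by apply/negbTE/negP => /(subsetP sA); rewrite unfold_in ltnn.
rewrite add0n; apply: eq_bigr => i /negbTE ne; rewrite phiE ne.
by case: (i \in A); rewrite ?muln1 ?muln0.
Qed.

Lemma pa_phi (A : {set 'I_n.+1}) : A \subset (fun i : 'I_n.+1 => (s < i)%N) ->
  parts_above (phi A) s = #|A|.
Proof.
move=> sA; rewrite /parts_above -sum1_card [RHS]big_mkcond [RHS](bigID (fun i : 'I_n.+1 => (s < i)%N)) /=.
rewrite [X in _ = addn _ X]big1 ?addn0; last first.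
  move=> i /negbTE ni; case: ifP => // /(subsetP sA); by rewrite unfold_in ni.
apply: eq_bigr => i lt; rewrite phiE.
have -> : (i == s) = false by apply/negbTE/eqP => e; rewrite e ltnn in lt.
by case: (i \in A).
Qed.

Lemma cond_phi (A : {set 'I_n.+1}) :
  is_Dk (phi A) s && (psi (phi A) == A) =
  (A \subset (fun i : 'I_n.+1 => (s < i)%N)) && ((k * s + \sum_(i in A) i)%N == n).
Proof.
case: (boolP (A \subset _)) => sA /=.
  have -> : psi (phi A) == A.
    apply/eqP/setP => i; rewrite /psi inE phiE.
    case: (boolP (s < i)%N) => lt /=.
      have -> : (i == s) = false by apply/negbTE/eqP => e; rewrite e ltnn in lt.
      by case: (i \in A).
    by apply/esym/negP => /(subsetP sA); rewrite unfold_in (negbTE lt).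
  rewrite andbT /is_Dk sum_phi // phiE eqxx eqxx /=.
  case: (_ == n) => //=.
  apply/andP; split; apply/forallP => i; apply/implyP => lt; rewrite phiE.
    have -> : (i == s) = false by apply/negbTE/eqP => e; rewrite e ltnn in lt.
    case: (boolP (i \in A)) => //= /(subsetP sA); rewrite unfold_in => lt'.
    by have := ltn_trans lt lt'; rewrite ltnn.
  have -> : (i == s) = false by apply/negbTE/eqP => e; rewrite e ltnn in lt.
  by case: (i \in A).
apply/negbTE/negP => /andP [_ /eqP e].
move/negP: sA; apply; rewrite -e; apply/subsetP => i; rewrite /psi inE => /andP [h _].
by rewrite unfold_in.
Qed.

Lemma D_fixed_s :
  \sum_(m : mult_fun n k) (if is_Dk m s then (-1) ^+ (parts_above m s) else 0)
  = ('X^(k * s) * RR s n)`_n.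
Proof.
rewrite -big_mkcond /= (reindex_onto phi psi phi_psi) /=.
under eq_bigl do rewrite cond_phi.
rewrite coefXnM /RR prod_expand.
case: ltnP => lt.
  rewrite big1 // => A /andP [_ /eqP e]; lia.
rewrite [RHS]big_mkcond [LHS]big_mkcond /=; apply: eq_bigr => A _.
case: (boolP (A \subset _)) => sA /=; last by [].
rewrite pa_phi //.
case: eqP => e.
  have h : forall x, (k * s + x = n)%N -> (x == n - k * s)%N by move=> x ?; apply/eqP; lia.
  by rewrite (h _ e) mulr1.
have h : forall x, (k * s + x <> n)%N -> (x == n - k * s)%N = false by move=> x ?; apply/negbTE; lia.
by rewrite (h _ e) mulr0.
Qed.
End Fix.

Lemma RR_top N : RR N N = 1.
Proof. by rewrite /RR big1 // => i; rewrite ltnNge -ltnS ltn_ord. Qed.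

Lemma RR_step s N : (s < N)%N -> RR s N = (1 - 'X^(s.+1)) * RR s.+1 N.
Proof.
move=> lt; rewrite /RR (bigD1 (Ordinal (lt : s.+1 < N.+1)%N)) //=.
congr (_ * _); apply: eq_bigl => i; rewrite -(inj_eq val_inj) /=; lia.
Qed.

Lemma RR_ext j N : (j <= N)%N -> RR j N.+1 = RR j N * (1 - 'X^(N.+1)).
Proof.
move=> le; rewrite /RR big_mkcond big_ord_recr /= -big_mkcond /=.
by have -> : (j < N.+1)%N by lia.
Qed.

Definition G (n k : nat) : {poly int} := \sum_(s < n.+1) 'X^(k * s) * RR s n.

Lemma G_rec n k : G n k.+1 = (1 - 'X^k) * G n k + 'X^(k * n.+1).
Proof.
have H1 : G n k - G n k.+1 = \sum_(s < n) 'X^(k * s.+1) * RR s n.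
  rewrite /G -sumrB big_ord_recl /= !muln0 subrr add0r.
  apply: eq_bigr => s _ /=; rewrite (_ : bump 0 s = s.+1) // (RR_step _ _ (ltn_ord s)) mulSn exprD; ring.
have H2 : 'X^k * G n k = \sum_(s < n) 'X^(k * s.+1) * RR s n + 'X^(k * n.+1).
  rewrite /G mulr_sumr big_ord_recr /= RR_top mulr1 mulnS exprD; congr (_ + _).
  by apply: eq_bigr => s _; rewrite mulnS exprD mulrA.
have -> : G n k.+1 = G n k - (G n k - G n k.+1) by ring.
rewrite H1 (_ : \sum_(s < n) 'X^(k * s.+1) * RR s n = 'X^k * G n k - 'X^(k * n.+1)).
  by ring.
by rewrite H2 addrK.
Qed.

Lemma coef_low (p q r : {poly int}) n : (forall i, (i <= n)%N -> p`_i = q`_i) ->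
  forall i, (i <= n)%N -> (r * p)`_i = (r * q)`_i.
Proof.
move=> H i le; rewrite !coefM; apply: eq_bigr => j _; rewrite H //; lia.
Qed.

Lemma GQ n N : forall i, (i <= n)%N -> (G n N.+1)`_i = (RR 0 N)`_i.
Proof.
elim: N => [|N IH] i le.
  by rewrite G_rec (_ : (0 * n.+1 = 0)%N) // expr0 subrr mul0r add0r RR_top ?coef1.
rewrite (G_rec n N.+1) coefD coefXn.
have -> : (i == N.+1 * n.+1)%N = false by apply/negbTE; nia.
rewrite addr0 (coef_low _ _ _ _ IH) // RR_ext // mulrC; reflexivity.
Qed.

Definition tt (N j : nat) : {poly int} :=
  (-1) ^+ j * 'X^(N * j + 'C(j.+1, 2)) * RR j N.
Definition TT (N : nat) := \sum_(j < N.+1) tt N j.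
Definition pa_ (j : nat) := (j * j + 'C(j, 2))%N.
Definition pb_ (j : nat) := (j * j + 'C(j.+1, 2))%N.
Definition Pent (N : nat) : {poly int} :=
  \sum_(j < N.+1) (-1) ^+ j * ('X^(pa_ j) + 'X^(pb_ j)) - 1.

Lemma binS2 j : 'C(j.+2, 2) = ('C(j.+1, 2) + j.+1)%N.
Proof. by rewrite binS bin1. Qed.

Lemma Shanks N : TT N = Pent N.
Proof.
elim: N => [|N IH].
  rewrite /TT /Pent !big_ord1 /tt /pa_ /pb_ /= RR_top.
  rewrite (_ : 'C(1, 2) = 0%N) // (_ : 'C(0, 2) = 0%N) // expr0 mul1r mulr1.
  rewrite (_ : (0 * 0 + 0 = 0)%N) // expr0; ring.
pose B j : {poly int} := - ((-1) ^+ j * 'X^(N * j + 'C(j.+1, 2) + N.+1 + j) * RR j N).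
have tel : \sum_(j < N.+1) (tt N.+1 j - tt N j) = B N.
  rewrite -(big_mkord xpredT (fun j => tt N.+1 j - tt N j)).
  rewrite (@telescope_sumr_eq _ 0 N.+1 (fun j => if j is j'.+1 then B j' else 0)) //.
    by rewrite subr0.
  move=> j /andP [_ lt]; case: j lt => [|j] lt.
    rewrite /tt /B subr0 RR_ext // (_ : 'C(1, 2) = 0%N) // !muln0 !addn0 !add0n.
    rewrite expr0; ring.
  rewrite /tt /B RR_ext // (RR_step j N) //.
  rewrite (_ : (N.+1 * j.+1 + 'C(j.+2, 2) = (N * j.+1 + 'C(j.+2, 2)) + j.+1)%N); last by lia.
  rewrite (_ : (N * j + 'C(j.+1, 2) + N.+1 + j = (N * j.+1 + 'C(j.+2, 2)))%N); last by rewrite binS2; lia.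
  rewrite !exprD exprS; ring.
rewrite /TT big_ord_recr /=.
have -> : \sum_(i < N.+1) tt N.+1 i = TT N + B N.
  by rewrite -tel /TT sumrB; ring.
rewrite IH /Pent [in RHS]big_ord_recr /= /B /tt RR_top RR_top.
rewrite /pa_ /pb_.
rewrite (_ : (N * N + 'C(N.+1, 2) + N.+1 + N = N.+1 * N.+1 + 'C(N.+1, 2))%N); last by nia.
rewrite exprS; ring.
Qed.

Lemma RR0_coef N n : (1 <= n)%N -> (n <= N)%N ->
  (RR 0 N)`_n = \sum_(j < N.+1) (-1) ^+ j * ((n == pa_ j)%:R + (n == pb_ j)%:R).
Proof.
move=> n1 nN.
have E : RR 0 N = TT N - \sum_(j < N) tt N j.+1.
  rewrite /TT big_ord_recl /= addrK /tt (_ : 'C(1, 2) = 0%N) // muln0 expr0 expr0 !mul1r.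
  reflexivity.
rewrite E coefB Shanks.
rewrite coef_sum big1 ?subr0; last first.
  move=> j _; rewrite /tt mulrAC mulrC coefXnM.
  have -> : (n < N * j.+1 + 'C(j.+2, 2))%N by rewrite binS2; nia.
  by [].
rewrite /Pent coefB coef_sum coef1.
have -> : (n == 0)%N = false by apply/negbTE; lia.
rewrite subr0; apply: eq_bigr => j _.
by rewrite coef_sign coefD !coefXn.
Qed.

Lemma C2 j : ('C(j, 2) * 2 + j = j * j)%N.
Proof. elim: j => [|j IH] //; rewrite binS bin1; nia. Qed.

Lemma pa2 j : (2 * pa_ j + j = 3 * j * j)%N.
Proof. rewrite /pa_; have := C2 j; nia. Qed.
Lemma pb2 j : (2 * pb_ j = 3 * j * j + j)%N.
Proof. rewrite /pb_ binS bin1; have := C2 j; nia. Qed.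

Lemma pent_inj n x y : (0 < x)%N -> 
  (n == pa_ x) || (n == pb_ x) -> (n == pa_ y) || (n == pb_ y) -> x = y.
Proof.
move=> x0 /orP [] /eqP -> /orP [] /eqP e;
  have := pa2 x; have := pb2 x; have := pa2 y; have := pb2 y; rewrite ?e => *;
  case: (ltngtP x y) => // lt; nia.
Qed.

Lemma pent_vals n m : (1 <= n)%N -> pentagonal_index n m ->
  exists j, [/\ (0 < j)%N, (j <= n)%N, (-1) ^ m = (-1) ^+ j :> int &
                (n == pa_ j) || (n == pb_ j)].
Proof.
move=> n1; case: m => j [] h.
- exists j; have := pa2 j; have := pb2 j => b a.
  have j0 : (0 < j)%N by case: j h b a => //= h; nia.
  split => //; [nia | apply/orP; right; apply/eqP; nia].
- exists j; have := pa2 j; have := pb2 j => b a.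
  have j0 : (0 < j)%N by case: j h b a => //= h; nia.
  split => //; [nia | apply/orP; left; apply/eqP; nia].
- exists j.+1; have := pa2 j.+1; have := pb2 j.+1 => b a.
  rewrite NegzE in h.
  split; [by [] | nia | by rewrite /exprz ?invr_sign | apply/orP; left; apply/eqP; nia].
- exists j.+1; have := pa2 j.+1; have := pb2 j.+1 => b a.
  rewrite NegzE in h.
  split; [by [] | nia | by rewrite /exprz ?invr_sign | apply/orP; right; apply/eqP; nia].
Qed.

Lemma pent_sum_yes n N m : (1 <= n)%N -> (n <= N)%N -> pentagonal_index n m ->
  \sum_(j < N.+1) (-1) ^+ j * ((n == pa_ j)%:R + (n == pb_ j)%:R) = (-1) ^ m :> int.
Proof.
move=> n1 nN /(pent_vals _ _ n1) [j [j0 jn -> hj]].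
have jN : (j < N.+1)%N by lia.
rewrite (bigD1 (Ordinal jN)) //= big1 ?addr0.
  have : (pa_ j < pb_ j)%N by rewrite /pa_ /pb_ binS bin1; lia.
  case/orP: hj => /eqP -> lt.
    by rewrite eqxx (_ : (pa_ j == pb_ j) = false) ?mulr1 //; apply/negbTE; lia.
  by rewrite eqxx (_ : (pb_ j == pa_ j) = false) ?mulr1 ?add0r //; apply/negbTE; lia.
move=> i ne.
case: (boolP ((n == pa_ i) || (n == pb_ i))) => h.
  by move: ne; have e := pent_inj _ _ _ j0 hj h; rewrite -(inj_eq val_inj) /= -e eqxx.
by case/norP: h => /negbTE -> /negbTE ->; rewrite addr0 mulr0.
Qed.

Lemma pent_sum_no n N : (1 <= n)%N -> (forall m, ~ pentagonal_index n m) ->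
  \sum_(j < N.+1) (-1) ^+ j * ((n == pa_ j)%:R + (n == pb_ j)%:R) = 0 :> int.
Proof.
move=> n1 hn; rewrite big1 // => j _.
have := pa2 j; have := pb2 j => b a.
case: (boolP (n == pa_ j)) => [/eqP e|_].
  by case: (hn (Posz j)); right; nia.
case: (boolP (n == pb_ j)) => [/eqP e|_].
  by case: (hn (Posz j)); left; nia.
by rewrite addr0 mulr0.
Qed.

Lemma P_coef k n :
  (Pk_e k n)%:Z - (Pk_o k n)%:Z = (\prod_(j < k | (0 < j)%N) (1 - 'X^j) : {poly int})`_n.
Proof.
rewrite /Pk_e /Pk_o /Pk_par !card_int -sumrB.
rewrite prod_expand.
rewrite [RHS]big_mkcond /=; apply: eq_bigr => S _.
have -> : [forall i in S, (0 < i)%N] = (S \subset (fun j : 'I_k => (0 < j)%N)).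
  apply/forall_inP/subsetP => h i /h //; by rewrite unfold_in.
case: (S \subset _) => /=; last by rewrite subrr.
case: (_ == n) => /=; last by rewrite mulr0 subrr.
by rewrite mulr1 -signr_odd; case: (odd #|S|).
Qed.

Lemma P_zero k n b : (k * (k - 1) %/ 2 < n)%N -> Pk_par k n b = 0%N.
Proof.
move=> lt; apply/eqP; rewrite cards_eq0; apply/eqP/setP => S; rewrite !inE.
apply/negbTE/negP => /and3P [_ /eqP e _].
have h1 : (\sum_(i in S) (i : nat) <= \sum_(i < k) (i : nat))%N.
  rewrite [X in (X <= _)%N]big_mkcond /=; apply: leq_sum => i _; by case: (i \in S).
have h2 : (\sum_(i < k) (i : nat) = 'C(k, 2))%N by rewrite -bin2_sum big_mkord.
have h3 : forall k, (k * (k - 1) = 'C(k, 2) * 2)%N by move=> x; have := C2 x; case: x => //= x; nia.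
rewrite h3 mulnK // in lt; rewrite e in h1; lia.
Qed.


Lemma D_coef k n : (0 < k)%N -> (Dk_e k n)%:Z - (Dk_o k n)%:Z = (G n k)`_n.
Proof.
move=> k0; rewrite (D_split _ _ k0) /G coef_sum; apply: eq_bigr => s _.
exact: D_fixed_s.
Qed.

Theorem theorem8 (k : nat) (hk : (0 < k)%N) (n : nat) (hn : (1 <= n)%N) :
  let diff := (Dk_e k n)%:Z - (Dk_o k n)%:Z in
  (forall m : int, pentagonal_index n m -> (n <= k - 1)%N ->
     diff = (-1) ^ m) /\
  ((k - 1 < n)%N -> (n <= k * (k - 1) %/ 2)%N ->
     diff = (Pk_e k n)%:Z - (Pk_o k n)%:Z) /\
  (~ ((exists m : int, pentagonal_index n m) /\ (n <= k - 1)%N) ->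
   ~ ((k - 1 < n)%N /\ (n <= k * (k - 1) %/ 2)%N) ->
     diff = 0).
Proof.
case: k hk => [//|N] _ /=.
have ED : (Dk_e N.+1 n)%:Z - (Dk_o N.+1 n)%:Z = (RR 0 N)`_n.
  by rewrite D_coef // GQ.
have EP : (Pk_e N.+1 n)%:Z - (Pk_o N.+1 n)%:Z = (RR 0 N)`_n by rewrite P_coef.
rewrite ED EP subn1 /=; split; [|split] => //.
  by move=> m hm nN; rewrite RR0_coef // (pent_sum_yes _ _ _ hn nN hm).
move=> h1 h2.
case: (leqP n N) => nN.
  rewrite RR0_coef // pent_sum_no // => m hm; apply: h1; split => //; by exists m.
rewrite -EP /Pk_e /Pk_o !P_zero ?subrr //;
  rewrite leqNgt; apply/negP => h; apply: h2; split => //; by rewrite subSS subn0 in h.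
Qed.
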